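(* Let $G$ be a countable discrete group and $\sigma: G\curvearrowright(X,\nu)$ a p.m.p. action on a standard probability space. For every natural number $n$ the map $\Psi_n: H^n(G,\mathbb{T})\to H^n(G\curvearrowright X;\mathbb{T})$, $\Psi_n([c])=[c']$ with $c'(g_1,\dots,g_n,x)=c(g_1,\dots,g_n)$, is a well-defined group homomorphism. Moreover: (i) if $\sigma$ is weakly mixing then $\Psi_1$ is injective; (ii) if the diagonal action $\sigma^2:G\curvearrowright(X^2,\nu^2)$ is weakly mixing and $\mathbb{T}$-cocycle superrigid, then $\Psi_2$ is injective.
   Context: $\mathbb{T}$ is the unit circle with trivial $G$-action; $H^n(G,\mathbb{T})$ is group cohomology via inhomogeneous cochains. For a p.m.p. action, a measurable $c:G^n\times X\to\mathbb{T}$ is an $n$-cocycle if for all $g_1,\dots,g_{n+1}$ and a.e. $x$: $c(g_2,\dots,g_{n+1},g_1^{-1}x)\prod_{i=1}^n c(g_1,\dots,g_ig_{i+1},\dots,g_{n+1},x)^{(-1)^i}\cdot c(g_1,\dots,g_n,x)^{(-1)^{n+1}}=1$; $c_1,c_2$ are cohomologous if for some measurable $b:G^{n-1}\times X\to\mathbb{T}$, for all $g_i$ and a.e. $x$, $c_1(g_1,\dots,g_n,x)\,b(g_2,\dots,g_n,g_1^{-1}x)\prod_{i=1}^{n-1}b(g_1,\dots,g_ig_{i+1},\dots,g_n,x)^{(-1)^i}\cdot b(g_1,\dots,g_{n-1},x)^{(-1)^n}=c_2(g_1,\dots,g_n,x)$; $H^n(G\curvearrowright X;\mathbb{T})$ is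 cocycles modulo those cohomologous to $1$. Weakly mixing: the diagonal action on the product of two copies is ergodic. A free ergodic p.m.p. action $G\curvearrowright(Y,\eta)$ is $\mathbb{T}$-cocycle superrigid if every measurable $c:G\times Y\to\mathbb{T}$ with $c(gh,y)=c(g,y)c(h,g^{-1}y)$ a.e. is of the form $c(g,y)=\lambda(g)b(y)b(g^{-1}y)^{-1}$ a.e. for some homomorphism $\lambda:G\to\mathbb{T}$ and measurable $b:Y\to\mathbb{T}$. *)

(* Defs.v *)
From HB Require Import structures.
From mathcomp Require Import all_boot all_order all_algebra.
From mathcomp Require Import complex.
From mathcomp Require Import all_classical all_reals all_analysis.
Set Implicit Arguments. Unset Strict Implicit. Unset Printing Implicit Defensive.
Import Order.TTheory GRing.Theory Num.Theory.
Local Open Scope classical_set_scope.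
Local Open Scope ring_scope.

(* The unit circle T is {z : R[i] | |z| = 1}, with the group structure given  *)
(* by complex multiplication and the Borel structure of the subspace of R^2.  *)
Definition circle (R : realType) (z : R[i]) : Prop := `|z| = 1.

Definition measurable_T d (Y : measurableType d) (R : realType)
    (f : Y -> R[i]) : Prop :=
  (forall y, circle (f y)) /\
  measurable_fun setT (fun y => complex.Re (f y)) /\
  measurable_fun setT (fun y => complex.Im (f y)).

(* Standard Borel space: Borel-isomorphic to a Borel subset of the reals      *)
(* (Kuratowski: equivalent to being the Borel space of a Polish topology).    *)
Definition standard_borel d (X : measurableType d) (R : realType) : Prop :=
  exists f : X -> R,
    [/\ measurable_fun setT f, injective f, measurable (range f)
      & forall A : set X, measurable A -> measurable (f @` A)].

Definition mp_action (G : groupType) d (Y : measurableType d) (R : realType)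
    (m : set Y -> \bar R) (act : G -> Y -> Y) : Prop :=
  [/\ forall y, act 1%g y = y,
      forall g h y, act (g * h)%g y = act g (act h y),
      forall g, measurable_fun setT (act g)
    & forall g (A : set Y), measurable A -> m (act g @^-1` A) = m A].

Definition ergodic (G : groupType) d (Y : measurableType d) (R : realType)
    (m : set Y -> \bar R) (act : G -> Y -> Y) : Prop :=
  forall A : set Y, measurable A -> (forall g, act g @^-1` A = A) ->
    m A = 0%E \/ m A = 1%E.

Definition diag_action (G : groupType) (Y : Type) (act : G -> Y -> Y) :
    G -> Y * Y -> Y * Y :=
  fun g p => (act g p.1, act g p.2).

Definition weakly_mixing (G : groupType) d (Y : measurableType d)
    (R : realType) (m : set Y -> \bar R) (act : G -> Y -> Y) : Prop :=
  ergodic (m \x m)%E (diag_action act).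

Definition free_action (G : groupType) d (Y : measurableType d)
    (R : realType) (m : set Y -> \bar R) (act : G -> Y -> Y) : Prop :=
  forall g : G, g != 1%g -> {ae m, forall y, act g y <> y}.

Definition Tcocycle_superrigid (G : groupType) d (Y : measurableType d)
    (R : realType) (m : set Y -> \bar R) (act : G -> Y -> Y) : Prop :=
  [/\ free_action m act, ergodic m act &
  forall c : G -> Y -> R[i],
    (forall g, measurable_T (c g)) ->
    (forall g h, {ae m, forall y, c (g * h)%g y = c g y * c h (act g^-1%g y)}) ->
    exists lam : G -> R[i],
      [/\ forall g, circle (lam g),
          forall g h, lam (g * h)%g = lam g * lam h &
          exists b : Y -> R[i], measurable_T b /\
            forall g, {ae m, forall y,
              c g y = lam g * b y * (b (act g^-1%g y))^-1}]].

(* Inhomogeneous cochains: an n-cochain is a function on lists of length n.  *)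
(* mulface i [g1; ..; gk] = [g1; ..; g(i+1) g(i+2); ..; gk]                  *)
Fixpoint mulface (G : groupType) (i : nat) (s : seq G) : seq G :=
  match s with
  | x :: ((y :: t) as t') =>
      if i is j.+1 then x :: mulface j t' else (x * y)%g :: t
  | _ => s
  end.

(* Coboundary (trivial action) of the n-cochain c, evaluated at g in G^(n+1): *)
(* c(g2..g(n+1)) prod_{i=1}^n c(g1,..,gi g(i+1),..)^(-1)^i c(g1..gn)^(-1)^(n+1) *)
Definition coboundary (G : groupType) (R : realType) (n : nat)
    (c : seq G -> R[i]) (g : seq G) : R[i] :=
  c (behead g) * (\prod_(1 <= i < n.+1) c (mulface i.-1 g) ^ ((-1) ^+ i : int))
  * c (take n g) ^ ((-1) ^+ n.+1 : int).

Definition group_cochain (G : groupType) (R : realType) (n : nat)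
    (c : seq G -> R[i]) : Prop :=
  forall g, size g = n -> circle (c g).

Definition group_cocycle (G : groupType) (R : realType) (n : nat)
    (c : seq G -> R[i]) : Prop :=
  group_cochain n c /\ forall g, size g = n.+1 -> coboundary n c g = 1.

Definition group_cohomologous (G : groupType) (R : realType) (n : nat)
    (c1 c2 : seq G -> R[i]) : Prop :=
  match n with
  | 0 => c1 [::] = c2 [::]
  | k.+1 => exists b : seq G -> R[i], group_cochain k b /\
      forall g, size g = k.+1 -> c1 g * coboundary k b g = c2 g
  end.

(* Coboundary for the action; g1^{-1} x acts in the first term. *)
Definition act_coboundary (G : groupType) d (X : measurableType d)
    (R : realType) (act : G -> X -> X) (n : nat)
    (c : seq G -> X -> R[i]) (g : seq G) (x : X) : R[i] :=
  c (behead g) (act (head 1%g g)^-1%g x)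
  * (\prod_(1 <= i < n.+1) c (mulface i.-1 g) x ^ ((-1) ^+ i : int))
  * c (take n g) x ^ ((-1) ^+ n.+1 : int).

(* measurable n-cochains G^n x X -> T (G countable discrete: measurability  *)
(* amounts to measurability of every section x |-> c(g1..gn, x)).           *)
Definition act_cochain (G : groupType) d (X : measurableType d)
    (R : realType) (n : nat) (c : seq G -> X -> R[i]) : Prop :=
  forall g, size g = n -> measurable_T (c g).

Definition act_cocycle (G : groupType) d (X : measurableType d)
    (R : realType) (mu : set X -> \bar R) (act : G -> X -> X) (n : nat)
    (c : seq G -> X -> R[i]) : Prop :=
  act_cochain n c /\
  forall g, size g = n.+1 -> {ae mu, forall x, act_coboundary act n c g x = 1}.

(* c1 and c2 are cohomologous in H^n(G ~ X; T); cochains are taken up to     *)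
(* null sets (which for n >= 1 is automatic, taking b = 1).                 *)
Definition act_cohomologous (G : groupType) d (X : measurableType d)
    (R : realType) (mu : set X -> \bar R) (act : G -> X -> X) (n : nat)
    (c1 c2 : seq G -> X -> R[i]) : Prop :=
  match n with
  | 0 => {ae mu, forall x, c1 [::] x = c2 [::] x}
  | k.+1 => exists b : seq G -> X -> R[i], act_cochain k b /\
      forall g, size g = k.+1 ->
        {ae mu, forall x, c1 g x * act_coboundary act k b g x = c2 g x}
  end.

Definition Psi (G : groupType) (X : Type) (R : realType)
    (c : seq G -> R[i]) : seq G -> X -> R[i] := fun g _ => c g.
Arguments Psi {G} X {R} c _ _.

(* Main.v *)
Require Import Defs.
From HB Require Import structures.
From mathcomp Require Import all_boot all_order all_algebra.
From mathcomp Require Import complex.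
From mathcomp Require Import all_classical all_reals all_analysis.
From mathcomp Require Import measurable_realfun ring lra.
Import Order.TTheory GRing.Theory Num.Theory.
Local Open Scope classical_set_scope.
Local Open Scope ring_scope.

Section Cx.
Context {R : realType}.
Implicit Types z w : R[i].
Lemma ReM z w : complex.Re (z * w) = complex.Re z * complex.Re w - complex.Im z * complex.Im w.
Proof. by case: z => a b; case: w => c d. Qed.
Lemma ImM z w : complex.Im (z * w) = complex.Re z * complex.Im w + complex.Im z * complex.Re w.
Proof. case: z => a b; case: w => c d /=. by rewrite addrC. Qed.
Lemma circle_sq z : circle z -> complex.Re z ^+ 2 + complex.Im z ^+ 2 = 1.
Proof.
rewrite /circle; case: z => a b /= H.
have := congr1 (@complex.Re R) H; rewrite /= => /(congr1 (fun t => t ^+ 2)).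
by rewrite sqr_sqrtr ?addr_ge0 ?sqr_ge0 // expr1n.
Qed.
Lemma ReV z : circle z -> complex.Re (z^-1) = complex.Re z.
Proof. move/circle_sq; case: z => a b /= ->; by rewrite divr1. Qed.
Lemma ImV z : circle z -> complex.Im (z^-1) = - complex.Im z.
Proof. move/circle_sq; case: z => a b /= ->; by rewrite divr1. Qed.
Lemma circle_neq0 z : circle z -> z != 0.
Proof. rewrite /circle => H; apply/eqP => z0; move: H; rewrite z0 normr0 => /eqP; by rewrite eq_sym oner_eq0. Qed.
Lemma circleM z w : circle z -> circle w -> circle (z * w).
Proof. by rewrite /circle normrM => -> ->; rewrite mulr1. Qed.
Lemma circleV z : circle z -> circle (z^-1).
Proof. by rewrite /circle normfV => ->; rewrite invr1. Qed.
Lemma circle1 : circle (1 : R[i]).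
Proof. by rewrite /circle normr1. Qed.
Lemma ReIm_eq z w : complex.Re z = complex.Re w -> complex.Im z = complex.Im w -> z = w.
Proof. by case: z => a b; case: w => c d /= -> ->. Qed.
Lemma Re_bnd z : circle z -> -1 <= complex.Re z <= 1.
Proof.
move/circle_sq; move: (complex.Re z) (complex.Im z) => a b H.
apply/andP; split; nra.
Qed.
Lemma Im_bnd z : circle z -> -1 <= complex.Im z <= 1.
Proof.
move/circle_sq; move: (complex.Re z) (complex.Im z) => a b H.
apply/andP; split; nra.
Qed.
End Cx.

Section MT.
Context {R : realType} {d : measure_display} {Y : measurableType d}.
Implicit Types f g : Y -> R[i].
Lemma MT_cst (k : R[i]) : circle k -> measurable_T (fun _ : Y => k).
Proof. by move=> ck; split=> //; split; exact: measurable_cst. Qed.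
Lemma MT_mul f g : measurable_T f -> measurable_T g -> measurable_T (fun y => f y * g y).
Proof.
move=> [cf [rf jf]] [cg [rg jg]]; split; first by move=> y; exact: circleM.
split.
- rewrite (_ : (fun y => _) = (fun y => complex.Re (f y) * complex.Re (g y) - complex.Im (f y) * complex.Im (g y))); last by apply/funext => y; rewrite ReM.
  by apply: measurable_realfun.measurable_funB; apply: measurable_realfun.measurable_funM.
- rewrite (_ : (fun y => _) = (fun y => complex.Re (f y) * complex.Im (g y) + complex.Im (f y) * complex.Re (g y))); last by apply/funext => y; rewrite ImM.
  by apply: measurable_realfun.measurable_funD; apply: measurable_realfun.measurable_funM.
Qed.
Lemma MT_inv f : measurable_T f -> measurable_T (fun y => (f y)^-1).
Proof.
move=> [cf [rf jf]]; split; first by move=> y; exact: circleV.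
split.
- by rewrite (_ : (fun y => _) = (fun y => complex.Re (f y))) //; apply/funext => y; rewrite ReV.
- rewrite (_ : (fun y => _) = (fun y => - complex.Im (f y))); last by apply/funext => y; rewrite ImV.
  exact: measurable_realfun.measurable_funN.
Qed.
Lemma MT_comp d' (Z : measurableType d') (h : Z -> Y) f :
  measurable_T f -> measurable_fun setT h -> measurable_T (fun z => f (h z)).
Proof.
move=> [cf [rf jf]] mh; split => //; split.
- exact: (measurableT_comp rf mh).
- exact: (measurableT_comp jf mh).
Qed.
End MT.


Section AE.
Variables (R : realType) (d : measure_display) (Y : measurableType d) (m : probability Y R).

Lemma ae_ex (P : Y -> Prop) : {ae m, forall y, P y} -> exists y, P y.
Proof.
move=> [N [mN N0 sub]]; apply: contrapT => nex.
have NT : N = setT.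
  apply/seteqP; split => // y _; apply: sub => Py; apply: nex; by exists y.
by move: N0; rewrite NT probability_setT => /eqP; rewrite onee_eq0.
Qed.

Lemma ae_pre (f : Y -> Y) (P : Y -> Prop) : measurable_fun setT f ->
  (forall A, measurable A -> m (f @^-1` A) = m A) ->
  {ae m, forall y, P y} -> {ae m, forall y, P (f y)}.
Proof.
move=> mf pf [N [mN N0 sub]]; exists (f @^-1` N); split.
- by rewrite -[X in measurable X]setTI; apply: mf.
- by rewrite pf.
- by move=> y /= nP; apply: sub.
Qed.

Lemma ae_countable (G : Type) (cG : countable [set: G]) (P : G -> Y -> Prop) :
  (forall g, {ae m, forall y, P g y}) -> {ae m, forall y, forall g, P g y}.
Proof.
move=> H; have /countable_injP [f finj] := cG.
have : {ae m, forall y, forall n, forall g, f g = n -> P g y}.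
  apply: ae_foralln => n.
  have [[g fg]|nog] := pselect (exists g, f g = n).
    apply: filterS (H g) => y Pgy g' fg'.
    have -> : g' = g by apply: finj; rewrite ?inE // fg fg'.
    done.
  by apply: aeW => y g fg; exfalso; apply: nog; exists g.
by apply: filterS => y Hy g; exact: (Hy (f g) g erefl).
Qed.
End AE.
Arguments ae_ex {R d Y m P}.
Arguments ae_pre {R d Y m f P}.
Arguments ae_countable {R d Y m G} cG {P}.

Section Prod.
Variables (R : realType) (d1 d2 : measure_display) (Y1 : measurableType d1) (Y2 : measurableType d2).
Variables (m1 : probability Y1 R) (m2 : probability Y2 R).
Local Open Scope ereal_scope.

Lemma ae_fst (P : Y1 -> Prop) : {ae m1, forall x, P x} -> {ae (m1 \x m2), forall p, P p.1}.
Proof.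
move=> [N [mN N0 sub]]; exists (N `*` setT); split.
- exact: measurableX.
- rewrite product_measure1E //; transitivity (0 * m2 setT); [congr (_ * _); exact: N0|exact: mul0e].
- by move=> [x y] /= nP; split => //; apply: sub.
Qed.

Lemma ae_snd (P : Y2 -> Prop) : {ae m2, forall x, P x} -> {ae (m1 \x m2), forall p, P p.2}.
Proof.
move=> [N [mN N0 sub]]; exists (setT `*` N); split.
- exact: measurableX.
- rewrite product_measure1E //; transitivity (m1 setT * 0); [congr (_ * _); exact: N0|exact: mule0].
- by move=> [x y] /= nP; split => //; apply: sub.
Qed.

Lemma pm1_int (N : set (Y1 * Y2)) : (m1 \x m2) N = \int[m1]_x m2 (xsection N x).
Proof. by []. Qed.

Lemma int0_ae (f : Y1 -> \bar R) : measurable_fun [set: Y1] f -> (forall x, 0 <= f x) ->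
  \int[m1]_x f x = 0 -> {ae m1, forall x, f x = 0}.
Proof.
move=> mf f0 H.
have : \int[m1]_(x in setT) `|f x| = 0.
  by rewrite -H; apply: eq_integral => x _; rewrite gee0_abs.
move/(@ae_eq_integral_abs _ _ _ m1 setT measurableT f mf).
by apply: filterS => x /(_ I).
Qed.

Lemma ae_int0 (f : Y1 -> \bar R) : measurable_fun [set: Y1] f -> (forall x, 0 <= f x) ->
  {ae m1, forall x, f x = 0} -> \int[m1]_x f x = 0.
Proof.
move=> mf f0 H.
have : \int[m1]_(x in setT) `|f x| = 0.
  apply/(@ae_eq_integral_abs _ _ _ m1 setT measurableT f mf).
  by apply: filterS H => x ->.
by move=> <-; apply: eq_integral => x _; rewrite gee0_abs.
Qed.

Lemma null_xsection {N : set (Y1 * Y2)} : measurable N -> (m1 \x m2) N = 0 ->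
  {ae m1, forall x, m2 (xsection N x) = 0}.
Proof.
move=> mN N0; apply: int0_ae => //; try exact: measurable_fun_xsection.
all: try by move=> x; apply: measure_ge0; exact: measurable_xsection.
Qed.

Lemma ae_slice1 (P : Y1 * Y2 -> Prop) : {ae (m1 \x m2), forall p, P p} ->
  exists x, {ae m2, forall y, P (x, y)}.
Proof.
move=> [N [mN N0 sub]].
have [x hx] := ae_ex (null_xsection mN N0).
exists x; exists (xsection N x); split => //; first exact: measurable_xsection.
move=> y /= nP; rewrite /xsection /= inE; exact: sub.
Qed.

Lemma ae_fst_inv (P : Y1 -> Prop) : {ae (m1 \x m2), forall p, P p.1} -> {ae m1, forall x, P x}.
Proof.
move=> [N [mN N0 sub]].
apply: filterS (null_xsection mN N0) => x h; apply: contrapT => nP.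
have : xsection N x = setT.
  apply/seteqP; split => // y _; rewrite /xsection /= inE; exact: sub.
move=> e; move: h; rewrite e probability_setT => /eqP; by rewrite onee_eq0.
Qed.

End Prod.
Arguments ae_fst {R d1 d2 Y1 Y2 m1 m2 P}.
Arguments ae_snd {R d1 d2 Y1 Y2 m1 m2 P}.
Arguments int0_ae {R d1 Y1 m1 f}.
Arguments ae_int0 {R d1 Y1 m1 f}.
Arguments null_xsection {R d1 d2 Y1 Y2 m1 m2 N}.
Arguments ae_slice1 {R d1 d2 Y1 Y2 m1 m2 P}.
Arguments ae_fst_inv {R d1 d2 Y1 Y2 m1 m2 P}.

Section Prod2.
Variables (R : realType) (d1 d2 : measure_display) (Y1 : measurableType d1) (Y2 : measurableType d2).
Variables (m1 : probability Y1 R) (m2 : probability Y2 R).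
Local Open Scope ereal_scope.

Lemma prod_pre (f1 : Y1 -> Y1) (f2 : Y2 -> Y2) (P : Y1 * Y2 -> Prop) :
  measurable_fun setT f1 -> measurable_fun setT f2 ->
  (forall A, measurable A -> m1 (f1 @^-1` A) = m1 A) ->
  (forall A, measurable A -> m2 (f2 @^-1` A) = m2 A) ->
  {ae (m1 \x m2), forall p, P p} -> {ae (m1 \x m2), forall p, P (f1 p.1, f2 p.2)}.
Proof.
move=> mf1 mf2 pf1 pf2 [N [mN N0 sub]].
have mF : measurable_fun setT (fun p : Y1 * Y2 => (f1 p.1, f2 p.2)).
  apply/measurable_fun_pairP; split.
  - exact: (measurableT_comp mf1 measurable_fst).
  - exact: (measurableT_comp mf2 measurable_snd).
exists ((fun p : Y1 * Y2 => (f1 p.1, f2 p.2)) @^-1` N); split.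
- by rewrite -[X in measurable X]setTI; apply: mF.
- rewrite pm1_int.
  rewrite (eq_integral (fun x => m2 (xsection N (f1 x)))); last first.
    move=> x _; rewrite -(pf2 (xsection N (f1 x))); last exact: measurable_xsection.
    f_equal; apply/seteqP; split => y; rewrite /xsection /= !inE //.
  apply: ae_int0.
  + exact: (measurableT_comp (measurable_fun_xsection m2 mN) mf1).
  + by move=> x; apply: measure_ge0; exact: measurable_xsection.
  + apply: (ae_pre mf1 pf1 (P := fun x => m2 (xsection N x) = 0)).
    exact: (null_xsection mN N0).
- by move=> p /= nP; apply: sub.
Qed.
End Prod2.

Section Cross.
Variables (R : realType) (d1 d2 : measure_display) (A1 : measurableType d1) (A2 : measurableType d2).
Variables (a1 : probability A1 R) (a2 : probability A2 R).
Local Open Scope ereal_scope.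

Lemma mu_Tx (S : set A2) : measurable S -> (a1 \x a2) (setT `*` S) = a2 S.
Proof. move=> mS; rewrite product_measure1E //; transitivity (1 * a2 S); [congr (_ * _); exact: probability_setT|exact: mul1e]. Qed.
Lemma mu_xT (S : set A1) : measurable S -> (a1 \x a2) (S `*` setT) = a1 S.
Proof. move=> mS; rewrite product_measure1E //; transitivity (a1 S * 1); [congr (_ * _); exact: probability_setT|exact: mule1]. Qed.

Lemma cross1 (P : A1 * A2 -> Prop) : {ae (a1 \x a2), forall p, P p} ->
  {ae ((a1 \x a2) \x (a1 \x a2)), forall pq, P (pq.1.1, pq.2.2)}.
Proof.
move=> [N [mN N0 sub]].
have mF : measurable_fun setT (fun pq : (A1 * A2) * (A1 * A2) => (pq.1.1, pq.2.2)).
  apply/measurable_fun_pairP; split.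
  - exact: (measurableT_comp measurable_fst measurable_fst).
  - exact: (measurableT_comp measurable_snd measurable_snd).
exists ((fun pq : (A1 * A2) * (A1 * A2) => (pq.1.1, pq.2.2)) @^-1` N); split.
- by rewrite -[X in measurable X]setTI; apply: mF.
- rewrite pm1_int.
  rewrite (eq_integral (fun p => a2 (xsection N p.1))); last first.
    move=> p _; rewrite (_ : xsection _ p = setT `*` xsection N p.1); last first.
      by apply/seteqP; split => -[x y]; rewrite /xsection /= !inE //=; by [case | move=> h; split].
    by apply: mu_Tx; exact: measurable_xsection.
  apply: ae_int0.
  + exact: (measurableT_comp (measurable_fun_xsection a2 mN) measurable_fst).
  + by move=> x; apply: measure_ge0; exact: measurable_xsection.
  + apply: (ae_fst (P := fun x => a2 (xsection N x) = 0)).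
    exact: (null_xsection mN N0).
- by move=> p /= nP; apply: sub.
Qed.

Lemma pm12 (N : set (A1 * A2)) : measurable N -> (a1 \x a2) N = (a1 \x^ a2) N.
Proof.
move=> mN; apply: product_measure_unique => // A B mA mB.
exact: product_measure2E.
Qed.

Lemma cross2 (P : A1 * A2 -> Prop) : {ae (a1 \x a2), forall p, P p} ->
  {ae ((a1 \x a2) \x (a1 \x a2)), forall pq, P (pq.2.1, pq.1.2)}.
Proof.
move=> [N [mN N0 sub]].
have mF : measurable_fun setT (fun pq : (A1 * A2) * (A1 * A2) => (pq.2.1, pq.1.2)).
  apply/measurable_fun_pairP; split.
  - exact: (measurableT_comp measurable_fst measurable_snd).
  - exact: (measurableT_comp measurable_snd measurable_fst).
exists ((fun pq : (A1 * A2) * (A1 * A2) => (pq.2.1, pq.1.2)) @^-1` N); split.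
- by rewrite -[X in measurable X]setTI; apply: mF.
- rewrite pm1_int.
  rewrite (eq_integral (fun p => a1 (ysection N p.2))); last first.
    move=> p _; rewrite (_ : xsection _ p = ysection N p.2 `*` setT); last first.
      by apply/seteqP; split => -[x y]; rewrite /xsection /ysection /= !inE //=; by [case | move=> h; split].
    by apply: mu_xT; exact: measurable_ysection.
  apply: ae_int0.
  + exact: (measurableT_comp (measurable_fun_ysection a1 mN) measurable_snd).
  + by move=> x; apply: measure_ge0; exact: measurable_ysection.
  + apply: (ae_snd (P := fun y => a1 (ysection N y) = 0)).
    apply: int0_ae.
    * exact: (measurable_fun_ysection a1 mN).
    * by move=> x; apply: measure_ge0; exact: measurable_ysection.
    * by rewrite -[LHS]/((a1 \x^ a2) N) -pm12.
- by move=> p /= nP; apply: sub.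
Qed.
End Cross.

Section Erg.
Variables (G : groupType) (cG : countable [set: G]) (R : realType) (d : measure_display)
  (Y : measurableType d) (m : probability Y R) (act : G -> Y -> Y).
Hypothesis mact : forall g, measurable_fun setT (act g).
Hypothesis act1 : forall y, act 1%g y = y.
Hypothesis actM : forall g h y, act (g * h)%g y = act g (act h y).
Hypothesis erg : ergodic m act.

Lemma erg_set (A : set Y) : measurable A ->
  (forall g, {ae m, forall y, A y -> A (act g y)}) -> m A = 0%E \/ m A = 1%E.
Proof.
move=> mA H.
pose As := [set y | forall g, A (act g y)].
have mAs : measurable As.
  have /countable_injP [f finj] := cG.
  have -> : As = \bigcap_n [set y | forall g, f g = n -> A (act g y)].
    apply/seteqP; split => [y Ay n _ g _|y Ay g] //; exact: (Ay (f g) I g erefl).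
  apply: bigcapT_measurable => n.
  have [[g fg]|nog] := pselect (exists g, f g = n).
    rewrite (_ : [set y | _] = act g @^-1` A).
      by rewrite -[X in measurable X]setTI; apply: mact.
    apply/seteqP; split => [y Ay|y Ay g' fg']; first exact: Ay.
    by have -> : g' = g by apply: finj; rewrite ?inE // fg fg'.
  rewrite (_ : [set y | _] = setT) //.
  by apply/seteqP; split => // y _ g fg; exfalso; apply: nog; exists g.
have inv : forall h, act h @^-1` As = As.
  move=> h; apply/seteqP; split => y Ay g /=.
  - have := Ay (g * h^-1)%g; by rewrite -actM -mulgA mulVg mulg1.
  - by rewrite -actM; exact: Ay.
have AsA : As `<=` A by move=> y /(_ 1%g); rewrite act1.
have neg : m.-negligible (A `\` As).
  have := ae_countable cG H; move=> [N [mN N0 sub]]; exists N; split => //.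
  move=> y [Ay nAsy]; apply: sub => /= h; apply: nAsy => g; exact: h.
have mD : measurable (A `\` As) by apply: measurableD.
have eq : m A = m As.
  have -> : A = As `|` (A `\` As).
    apply/seteqP; split => [y Ay|y [/AsA//|[]//]].
    by have [Asy|nAsy] := pselect (As y); [left|right].
  rewrite measureU //; last by rewrite setDE setICA setICr setI0.
  by rewrite (measure_negligible mD neg) adde0.
by rewrite eq; apply: erg.
Qed.

Lemma prob_compl0 (A : set Y) : measurable A -> m A = 1%E -> m (~` A) = 0%E.
Proof. by move=> mA h; rewrite probability_setC // h subee. Qed.

Lemma erg_real (f : Y -> R) : measurable_fun setT f -> (forall y, -1 <= f y <= 1) ->
  (forall g, {ae m, forall y, f (act g y) = f y}) -> exists t, {ae m, forall y, f y = t}.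
Proof.
move=> mf fb H.
have mlt : forall t, measurable [set y | f y < t].
  move=> t; rewrite (_ : [set y | f y < t] = setT `&` f @^-1` `]-oo, t[).
    by apply: mf => //; exact: measurable_itv.
  by apply/seteqP; split => y /=; rewrite in_itv /= ?andbT; [move=> ->|case].

have lev : forall t, m [set y | f y < t] = 0%E \/ m [set y | f y < t] = 1%E.
  move=> t; apply: erg_set => // g; apply: filterS (H g) => y /= -> //.
pose S := [set t : R | m [set y | f y < t] = 0%E].
have S0 : S (-1).
  rewrite /S /= (_ : [set y | f y < -1] = set0) ?measure0 //.
  apply/seteqP; split => [y /= fy|//]; have := fb y; case/andP => h _; move: fy; by rewrite ltNge h.
have Sub : forall t, S t -> t <= 1.
  move=> t St; rewrite leNgt; apply/negP => t1; move: St; rewrite /S /=.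
  rewrite (_ : [set y | f y < t] = setT) ?probability_setT.
    by move/eqP; rewrite onee_eq0.
  apply/seteqP; split => [//|z _ /=]; have := fb z; case/andP => _ h.
  exact: le_lt_trans h t1.
have hS : has_sup S by split; [exists (-1) | exists 1 => t /Sub].
exists (sup S).
have n1 : m.-negligible [set y | f y < sup S].
  apply: (@negligibleS _ _ _ m (\bigcup_n [set y | f y < sup S - n.+1%:R^-1])).
    move=> y /= fy; have [k hk] := ltr_add_invr fy; exists k => //=.
    by rewrite ltrBrDr.
  apply: negligible_bigcup => n.
  have ep : (0:R) < n.+1%:R^-1 by rewrite invr_gt0.
  have [e Se he] := sup_adherent ep hS.
  exists [set y | f y < e]; split => //; move=> y /= h; exact: lt_trans h he.
have n2 : m.-negligible [set y | sup S < f y].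
  apply: (@negligibleS _ _ _ m (\bigcup_n ~` [set y | f y < sup S + n.+1%:R^-1])).
    move=> y /= fy; have [k hk] := ltr_add_invr fy; exists k => //=.
    by rewrite ltNge (ltW hk).
  apply: negligible_bigcup => n.
  exists (~` [set y | f y < sup S + n.+1%:R^-1]); split => //.
    exact: measurableC.
  apply: prob_compl0 => //.
  have [h0|//] := lev (sup S + n.+1%:R^-1).
  have ep : (0:R) < n.+1%:R^-1 by rewrite invr_gt0.
  have := sup_upper_bound hS h0; rewrite gerDl => h1.
  by have := lt_le_trans ep h1; rewrite ltxx.
have := negligibleU n1 n2; move=> [N [mN N0 sub]]; exists N; split => //.
move=> y /= nfy; apply: sub; have [h|h|h] := ltgtP (f y) (sup S).
- by left.
- by right.
- by exfalso; apply: nfy.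
Qed.
End Erg.


Lemma erg_T (G : groupType) (cG : countable [set: G]) (R : realType) (d : measure_display)
  (Y : measurableType d) (m : probability Y R) (act : G -> Y -> Y)
  (mact : forall g, measurable_fun setT (act g))
  (act1 : forall y, act 1%g y = y)
  (actM : forall g h y, act (g * h)%g y = act g (act h y))
  (erg : ergodic m act) (F : Y -> R[i]) :
  measurable_T F -> (forall g, {ae m, forall y, F (act g y) = F y}) ->
  exists k, {ae m, forall y, F y = k}.
Proof.
move=> [cF [rF iF]] H.
have [a ha] := @erg_real G cG R d Y m act mact act1 actM erg _ rF (fun y => Re_bnd _ (cF y))
  (fun g => filterS (fun y (e : F (act g y) = F y) => congr1 (@complex.Re R) e) (H g)).
have [b hb] := @erg_real G cG R d Y m act mact act1 actM erg _ iF (fun y => Im_bnd _ (cF y))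
  (fun g => filterS (fun y (e : F (act g y) = F y) => congr1 (@complex.Im R) e) (H g)).
exists (Complex a b); apply: filterS2 ha hb => y ea eb; exact: ReIm_eq.
Qed.
Arguments cross1 {R d1 d2 A1 A2 a1 a2 P}.
Arguments cross2 {R d1 d2 A1 A2 a1 a2 P}.
Arguments prod_pre {R d1 d2 Y1 Y2 m1 m2} f1 f2 {P}.

Lemma ae_imp2 {R : realType} {d} {Y : measurableType d} {m : probability Y R}
  {P1 P2 Q : Y -> Prop} : {ae m, forall y, P1 y} -> {ae m, forall y, P2 y} ->
  (forall y, P1 y -> P2 y -> Q y) -> {ae m, forall y, Q y}.
Proof. by move=> h1 h2 H; apply: filterS2 h1 h2 => y; exact: H. Qed.

Lemma ae_imp4 {R : realType} {d} {Y : measurableType d} {m : probability Y R}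
  {P1 P2 P3 P4 Q : Y -> Prop} : {ae m, forall y, P1 y} -> {ae m, forall y, P2 y} ->
  {ae m, forall y, P3 y} -> {ae m, forall y, P4 y} ->
  (forall y, P1 y -> P2 y -> P3 y -> P4 y -> Q y) -> {ae m, forall y, Q y}.
Proof.
move=> h1 h2 h3 h4 H; apply: filterS2 (filterI h1 h2) (filterI h3 h4) => y [? ?] [? ?].
exact: H.
Qed.

Section Cob.
Variables (G : groupType) (d : measure_display) (X : measurableType d) (R : realType) (act : G -> X -> X).

Lemma cob0 (b : seq G -> X -> R[i]) a x :
  act_coboundary act 0 b [:: a] x = b [::] (act a^-1%g x) * (b [::] x)^-1.
Proof. by rewrite /act_coboundary /= big_geq // mulr1 expr1 exprN1. Qed.

Lemma cob1 (b : seq G -> X -> R[i]) a c x :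
  act_coboundary act 1 b [:: a; c] x = b [:: c] (act a^-1%g x) * (b [:: a * c]%g x)^-1 * b [:: a] x.
Proof. by rewrite /act_coboundary /= big_nat1 /= expr1 exprN1 expr2 mulN1r opprK. Qed.

Lemma gcob0 (b : seq G -> R[i]) a : coboundary 0 b [:: a] = b [::] * (b [::])^-1.
Proof. by rewrite /coboundary /= big_geq // mulr1 expr1 exprN1. Qed.

Lemma gcob1 (b : seq G -> R[i]) a c :
  coboundary 1 b [:: a; c] = b [:: c] * (b [:: a * c]%g)^-1 * b [:: a].
Proof. by rewrite /coboundary /= big_nat1 /= expr1 exprN1 expr2 mulN1r opprK. Qed.

Lemma cob_one n g x : act_coboundary act n (fun _ _ => (1 : R[i])) g x = 1.
Proof. by rewrite /act_coboundary big1 ?exp1rz ?mulr1 // => i _; rewrite exp1rz. Qed.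
End Cob.

Lemma solveB {R : realType} {c1 c2 A B C : R[i]} : c1 != 0 -> A != 0 -> B != 0 -> C != 0 ->
  c1 * A * B^-1 * C = c2 -> B = c1 * A * C / c2.
Proof. by move=> h1 h2 h3 h4 <-; field; rewrite h1 h2 h3 h4. Qed.

Lemma diag_meas (G : groupType) d (X : measurableType d) (act : G -> X -> X) g :
  measurable_fun setT (act g) -> measurable_fun setT (diag_action act g).
Proof.
move=> m; apply/measurable_fun_pairP; split.
- exact: (measurableT_comp m measurable_fst).
- exact: (measurableT_comp m measurable_snd).
Qed.

Theorem lemma2 (G : groupType) (countG : countable [set: G])
    (d : measure_display) (X : measurableType d) (R : realType)
    (nu : probability X R) (stdX : standard_borel X R)
    (act : G -> X -> X) (pmp : mp_action nu act) :
  (forall n : nat,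
     (forall c, group_cocycle n c -> act_cocycle nu act n (Psi X c)) /\
     (forall c1 c2, group_cocycle n c1 -> group_cocycle n c2 ->
        group_cohomologous n c1 c2 ->
        act_cohomologous nu act n (Psi X c1) (Psi X c2)) /\
     (forall c1 c2, group_cocycle n c1 -> group_cocycle n c2 ->
        act_cohomologous nu act n (Psi X (fun g => c1 g * c2 g))
          (fun g x => Psi X c1 g x * Psi X c2 g x))) /\
  (weakly_mixing nu act ->
     forall c1 c2, group_cocycle 1 c1 -> group_cocycle 1 c2 ->
       act_cohomologous nu act 1 (Psi X c1) (Psi X c2) ->
       group_cohomologous 1 c1 c2) /\
  (weakly_mixing (nu \x nu)%E (diag_action act) ->
   Tcocycle_superrigid (nu \x nu)%E (diag_action act) ->
     forall c1 c2, group_cocycle 2 c1 -> group_cocycle 2 c2 ->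
       act_cohomologous nu act 2 (Psi X c1) (Psi X c2) ->
       group_cohomologous 2 c1 c2).
Proof.
have [act1 actM mact pact] := pmp.
have dact1 : forall p, diag_action act 1%g p = p by case=> x y; rewrite /diag_action /= !act1.
have dactM : forall g h p, diag_action act (g * h)%g p = diag_action act g (diag_action act h p).
  by move=> g h [x y]; rewrite /diag_action /= !actM.
have dmact : forall g, measurable_fun setT (diag_action act g) by move=> g; exact: diag_meas.
split.
  move=> n; split; [|split].
  - move=> c [cc cb]; split.
      by move=> g sg; apply: MT_cst; exact: cc.
    by move=> g sg; apply: aeW => x; exact: (cb g sg).
  - move=> c1 c2 _ _; case: n => [|k] /=.
      by move=> e; apply: aeW => x.
    move=> [b [bc H]]; exists (Psi X b); split.
      by move=> g sg; apply: MT_cst; exact: bc.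
    by move=> g sg; apply: aeW => x; exact: (H g sg).
  - move=> c1 c2 _ _; case: n => [|k] /=.
      by apply: aeW.
    exists (fun _ _ => 1); split.
      by move=> g _; apply: MT_cst; exact: circle1.
    by move=> g _; apply: aeW => x; rewrite cob_one mulr1.
split.
  move=> wm c1 c2 [cc1 _] [cc2 _] [b [hb H]].
  pose b0 := b [::].
  have mb0 : measurable_T b0 := hb [::] erefl.
  have nb0 : forall x, b0 x != 0 by move=> x; apply: circle_neq0; exact: mb0.1.
  have n1 : forall a, c1 [:: a] != 0 by move=> a; apply: circle_neq0; exact: cc1.
  have n2 : forall a, c2 [:: a] != 0 by move=> a; apply: circle_neq0; exact: cc2.
  have Ha : forall a, {ae nu, forall x, c1 [:: a] * (b0 (act a^-1%g x) * (b0 x)^-1) = c2 [:: a]}.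
    by move=> a; apply: filterS (H [:: a] erefl) => x /=; rewrite cob0.
  have key : forall a, {ae nu, forall x, b0 (act a x) = c2 [:: a^-1%g] / c1 [:: a^-1%g] * b0 x}.
    move=> a; apply: filterS (Ha a^-1%g) => x; rewrite invgK => <-.
    by field; rewrite n1 nb0.
  pose F := fun p : X * X => b0 p.1 * (b0 p.2)^-1.
  have MF : measurable_T F.
    apply: MT_mul; first exact: (@MT_comp _ _ _ _ _ fst _ mb0 measurable_fst).
    apply: MT_inv; exact: (@MT_comp _ _ _ _ _ snd _ mb0 measurable_snd).
  have inv : forall g, {ae (nu \x nu)%E, forall p, F (diag_action act g p) = F p}.
    move=> g; apply: filterS2 (ae_fst (key g)) (ae_snd (key g)) => p e1 e2.
    by rewrite /F /diag_action /= e1 e2; field; rewrite n1 n2 nb0.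
  have [k hk] := @erg_T _ countG _ _ _ _ _ dmact dact1 dactM wm _ MF inv.
  have [x0 hx0] := ae_slice1 hk.
  have [y1 hy1] := ae_ex hx0.
  have hb0 : {ae nu, forall y, b0 y = b0 y1}.
    apply: filterS hx0 => y; rewrite -hy1 /F /= => /(mulfI (nb0 x0)) /invr_inj //.
  exists (fun _ => 1); split; first by move=> g _; exact: circle1.
  case=> [|a [|a1 l]] //= _; rewrite gcob0 divr1 mulr1.
  have hb0' := ae_pre (mact a^-1%g) (pact a^-1%g) hb0.
  have [x [e1 [e2 e3]]] := ae_ex (filterI (Ha a) (filterI hb0 hb0')).
  by move: e1; rewrite e2 e3 divrr ?unitfE ?nb0 // mulr1.
move=> wm2 [_ _ SR] c1 c2 [cc1 _] [cc2 _] [b [hb H]].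
pose bb := fun g => b [:: g].
have mbb : forall g, measurable_T (bb g) by move=> g; exact: hb [:: g] erefl.
have nbb : forall g x, bb g x != 0 by move=> g x; apply: circle_neq0; exact: (mbb g).1.
have n1 : forall g h, c1 [:: g; h] != 0 by move=> g h; apply: circle_neq0; exact: cc1.
have n2 : forall g h, c2 [:: g; h] != 0 by move=> g h; apply: circle_neq0; exact: cc2.
have Rel : forall g h, {ae nu, forall x,
    c1 [:: g; h] * bb h (act g^-1%g x) * (bb (g * h)%g x)^-1 * bb g x = c2 [:: g; h]}.
  by move=> g h; apply: filterS (H [:: g; h] erefl) => x /=; rewrite cob1 !mulrA.
pose cc := fun g (p : X * X) => bb g p.1 * (bb g p.2)^-1.
have mcc : forall g, measurable_T (cc g).
  move=> g; apply: MT_mul; first exact: (@MT_comp _ _ _ _ _ fst _ (mbb g) measurable_fst).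
  apply: MT_inv; exact: (@MT_comp _ _ _ _ _ snd _ (mbb g) measurable_snd).
have ncc : forall g p, cc g p != 0 by move=> g p; apply: circle_neq0; exact: (mcc g).1.
have cocyc : forall g h, {ae (nu \x nu)%E, forall p,
    cc (g * h)%g p = cc g p * cc h (diag_action act g^-1%g p)}.
  move=> g h; apply: filterS2 (ae_fst (Rel g h)) (ae_snd (Rel g h)) => p e1 e2.
  rewrite /cc /diag_action /=.
  rewrite (solveB (n1 g h) (nbb _ _) (nbb _ _) (nbb _ _) e1).
  rewrite (solveB (n1 g h) (nbb _ _) (nbb _ _) (nbb _ _) e2).
  by field; rewrite !nbb n1 n2.
have [lam [clam hom [B [mB HB]]]] := SR cc mcc cocyc.
have nB : forall p, B p != 0 by move=> p; apply: circle_neq0; exact: mB.1.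
have nlam : forall g, lam g != 0 by move=> g; apply: circle_neq0; exact: clam.
have HB' : forall g, {ae (nu \x nu)%E, forall p,
    B (diag_action act g p) = lam g^-1%g * B p / cc g^-1%g p}.
  move=> g; apply: filterS (HB g^-1%g) => p; rewrite invgK => ->.
  by field; rewrite !nB nlam.
pose K := fun pq : (X * X) * (X * X) =>
  B pq.1 * B pq.2 * (B (pq.1.1, pq.2.2) * B (pq.2.1, pq.1.2))^-1.
have mx1 : measurable_fun setT (fun pq : (X * X) * (X * X) => (pq.1.1, pq.2.2)).
  apply/measurable_fun_pairP; split.
  - exact: (measurableT_comp measurable_fst measurable_fst).
  - exact: (measurableT_comp measurable_snd measurable_snd).
have mx2 : measurable_fun setT (fun pq : (X * X) * (X * X) => (pq.2.1, pq.1.2)).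
  apply/measurable_fun_pairP; split.
  - exact: (measurableT_comp measurable_fst measurable_snd).
  - exact: (measurableT_comp measurable_snd measurable_fst).
have MK : measurable_T K.
  apply: MT_mul; first apply: MT_mul.
  - exact: (@MT_comp _ _ _ _ _ fst _ mB measurable_fst).
  - exact: (@MT_comp _ _ _ _ _ snd _ mB measurable_snd).
  apply: MT_inv; apply: MT_mul.
  - exact: (@MT_comp _ _ _ _ _ _ _ mB mx1).
  - exact: (@MT_comp _ _ _ _ _ _ _ mB mx2).
have invK : forall g, {ae ((nu \x nu) \x (nu \x nu))%E, forall pq,
    K (diag_action (diag_action act) g pq) = K pq}.
  move=> g.
  have e1 := ae_fst (m2 := (nu \x nu)%E) (HB' g).
  have e2 := ae_snd (m1 := (nu \x nu)%E) (HB' g).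
  have e3 := cross1 (HB' g).
  have e4 := cross2 (HB' g).
  apply: (ae_imp4 e1 e2 e3 e4) => pq.
  rewrite /K /diag_action /= => -> -> -> ->.
  by rewrite /cc /=; field; rewrite !nB !nbb nlam.
have ddact1 : forall pq, diag_action (diag_action act) 1%g pq = pq.
  by case=> [[x y] [z w]]; rewrite /diag_action /= !act1.
have ddactM : forall g h pq, diag_action (diag_action act) (g * h)%g pq =
    diag_action (diag_action act) g (diag_action (diag_action act) h pq).
  by move=> g h [p q]; rewrite /diag_action /= !actM.
have ddmact : forall g, measurable_fun setT (diag_action (diag_action act) g).
  by move=> g; apply: diag_meas.
have [k hk] := @erg_T _ countG _ _ _ _ _ ddmact ddact1 ddactM wm2 _ MK invK.
have [p0 hp0] := ae_slice1 hk.
have nk : k != 0.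
  have [q eq] := ae_ex hp0; rewrite -eq /K /=.
  by rewrite !mulf_neq0 ?invr_eq0 ?mulf_neq0 ?nB.
pose phi := fun x => B (x, p0.2).
pose psi := fun y => B (p0.1, y).
pose c0 := k / B p0.
have hBf : {ae (nu \x nu)%E, forall q, B q = c0 * phi q.1 * psi q.2}.
  apply: filterS hp0 => q; rewrite /K /c0 /phi /psi /= => <-.
  by case: q => x y /=; field; rewrite !nB.
have mphi : measurable_T phi := @MT_comp _ _ _ _ _ _ _ mB (pair2_measurable p0.2).
have mpsi : measurable_T psi := @MT_comp _ _ _ _ _ _ _ mB (pair1_measurable p0.1).
have nphi : forall x, phi x != 0 by move=> x; exact: nB.
have npsi : forall y, psi y != 0 by move=> y; exact: nB.
have nc0 : c0 != 0 by rewrite /c0 mulf_neq0 ?invr_eq0.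
have Hu : forall g : G, exists be : R[i], circle be /\ {ae nu, forall x, bb g x = be * phi x / phi (act g^-1%g x)}.
  move=> g.
  pose u := fun x => bb g x * phi (act g^-1%g x) / phi x.
  pose v := fun y => bb g y * psi y / psi (act g^-1%g y).
  have e2 := prod_pre (act g^-1%g) (act g^-1%g) (mact _) (mact _) (pact _) (pact _) hBf.
  have huv : {ae (nu \x nu)%E, forall p, u p.1 = lam g * v p.2}.
    apply: (ae_imp4 (HB g) hBf e2 hBf) => p E0 E1 E2 _.
    move: E0; rewrite /cc /diag_action E1 /= E2 /= => E0.
    have ex : bb g p.1 = (lam g * (c0 * phi p.1 * psi p.2) *
        (c0 * phi (act g^-1%g p.1) * psi (act g^-1%g p.2))^-1) * bb g p.2.
      by rewrite -E0; field; rewrite nbb.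
    by rewrite /u /v ex; field; rewrite ?nphi ?npsi ?nc0 ?nbb.
  have [x0 hx0] := ae_slice1 huv.
  have hv : {ae nu, forall y, v y = u x0 / lam g}.
    by apply: filterS hx0 => y /= ->; field; rewrite nlam.
  have hu : {ae nu, forall x, u x = u x0}.
    apply: (ae_fst_inv (m2 := nu)).
    apply: (ae_imp2 huv (ae_snd (m1 := nu) hv)) => p -> -> .
    by field; rewrite nlam.
  exists (u x0); split.
    apply: circleM; first apply: circleM.
    - exact: (mbb g).1.
    - exact: mphi.1.
    - apply: circleV; exact: mphi.1.
  by apply: filterS hu => x; rewrite /u => <-; field; rewrite !nphi.
have [be Hbe] := choice Hu.
exists (fun s => be (head 1%g s)); split.
  by case=> [|a [|]] //= _; exact: (Hbe a).1.
case=> [|g [|h [|]]] //= _; rewrite gcob1 /=.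
have hh := ae_pre (mact g^-1%g) (pact g^-1%g) (Hbe h).2.
have [x [E [Eg [Egh Eh]]]] := ae_ex (filterI (Rel g h) (filterI (Hbe g).2 (filterI (Hbe (g * h)%g).2 hh))).
move: E; rewrite Eg Egh Eh invgM actM => <-.
have nbe : forall a, be a != 0 by move=> a; apply: circle_neq0; exact: (Hbe a).1.
by field; rewrite ?nphi ?nbe ?n1.
Qed.
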